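(* Let $0<\varepsilon<1$ and $N\ge1$. Then for every $t$, $$\left|F(t)-\hat F_N(t)\right|\le\left(\frac{\hat F_N(t)\big(1-\hat F_N(t)\big)}{N\varepsilon}\right)^{1/2}+\left(\frac1N+\frac{1}{N\varepsilon^{1/2}}\right)\left|\sum_{n=1}^N\mathds{1}\Big(\hat Q^{[n]}-\big|e_Q^{[n]}\big|\le t\le\hat Q^{[n]}+\big|e_Q^{[n]}\big|\Big)\right|+\frac{2}{(2N\varepsilon)^{3/4}}$$ with probability greater than or equal to $1-2\varepsilon+\varepsilon^2$.
   Context: Consider the initial value problem $\dot y=f(y,t;\theta)$, $t\in(0,T]$, $y(0)=y_0$, where $\theta$ is a random parameter, and a linear functional $S$ and threshold $R$. The quantity of interest $Q(y;\theta)=\min_{t\in(0,T]}\arg(S(y(t;\theta))=R)$ (the first time the threshold is reached, assumed to exist) is a random variable with cumulative distribution function $F(t)=P(\{\theta:Q(y;\theta)\le t\})$. Let $\theta^{[1]},\dots,\theta^{[N]}$ be independent samples of $\theta$ (Monte Carlo sampling), let $Q^{[n]}$ be the exact value of the QoI for $\theta^{[n]}$, and let $\hat Q^{[n]}$ be the value computed from a numerical solution $Y^{[n]}$ for $\theta^{[n]}$, with error $e_Q^{[n]}=Q^{[n]}-\hat Q^{[n]}$. Define the nominal empirical CDF $F_N(t)=\frac1N\sum_{n=1}^N\mathds{1}(Q^{[n]}\le t)$ and the approximate empirical CDF $\hat F_N(t)=\frac1N\sum_{n=1}^N\mathds{1}(\hat Q^{[n]}\le t)$, where $\mathds{1}$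 is the indicator function. *)

(* Defs.v *)
From HB Require Import structures.
From mathcomp Require Import all_boot all_order all_algebra.
From mathcomp Require Import all_classical all_reals all_analysis.
Set Implicit Arguments. Unset Strict Implicit. Unset Printing Implicit Defensive.
Import Order.TTheory GRing.Theory Num.Theory.
Import numFieldNormedType.Exports.
Local Open Scope classical_set_scope.
Local Open Scope ring_scope.

(* Mutual independence of a finite family of random elements X n : T -> Th:
   the product rule for every choice of measurable sets (taking B n = setT
   recovers the product rule for every subfamily). *)
Definition mutually_independent d d' (T : measurableType d) (R : realType)
  (P : probability T R) (Th : measurableType d') (N : nat)
  (X : 'I_N -> T -> Th) : Prop :=
  forall B : 'I_N -> set Th, (forall n, measurable (B n)) ->
    P (\bigcap_(n in [set: 'I_N]) (X n @^-1` B n)) =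
    (\prod_(n < N) P (X n @^-1` B n))%E.

Definition identically_distributed d d' (T : measurableType d) (R : realType)
  (P : probability T R) (Th : measurableType d') (N : nat)
  (X : 'I_N -> T -> Th) (Y : T -> Th) : Prop :=
  forall n (B : set Th), measurable B -> P (X n @^-1` B) = P (Y @^-1` B).

Definition qoi_cdf d d' (T : measurableType d) (R : realType)
  (P : probability T R) (Th : measurableType d') (theta : T -> Th)
  (Q : Th -> R) (t : R) : R :=
  fine (P [set w | Q (theta w) <= t]).

Definition empirical_cdf d d' (T : measurableType d) (R : realType)
  (Th : measurableType d') (N : nat) (th : 'I_N -> T -> Th)
  (Q : Th -> R) (w : T) (t : R) : R :=
  N%:R^-1 * \sum_(n < N) (nat_of_bool (Q (th n w) <= t))%:R.

(* Main.v *)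
Require Import Defs.
From HB Require Import structures.
From mathcomp Require Import all_boot all_order all_algebra.
From mathcomp Require Import all_classical all_reals all_analysis.
From mathcomp Require Import measurable_realfun.
From mathcomp Require Import ring lra.
Import Order.TTheory GRing.Theory Num.Theory.
Import numFieldNormedType.Exports.
Local Open Scope classical_set_scope.
Local Open Scope ring_scope.


Lemma powR34 (R : realType) (z : R) : 0 <= z -> (z `^ (3/4)) ^+ 4 = z ^+ 3.
Proof.
move=> z0.
rewrite -powR_mulrn; last exact: powR_ge0.
rewrite -powRrM -powR_mulrn //.
congr (_ `^ _).
by rewrite mulrC mulrA mulrC mulrA mulVf ?mul1r.
Qed.

Lemma det_bound (R : realType) (N k : nat) (eps F x y : R) :
  0 < eps < 1 -> (1 <= N)%N -> 0 <= F <= 1 -> 0 <= y <= 1 ->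
  `|x - y| <= k%:R / N%:R ->
  `|x - F| <= Num.sqrt (F * (1 - F) / (N%:R * eps)) ->
  `|F - y| <= Num.sqrt (y * (1 - y) / (N%:R * eps))
     + (N%:R^-1 + (N%:R * Num.sqrt eps)^-1) * `|(k%:R : R)|
     + 2 / ((2 * N%:R * eps) `^ (3 / 4)).
Proof.
move=> /andP[e0 e1] N1 /andP[F0 F1] /andP[y0 y1].
set n : R := N%:R.
have n0 : 0 < n by rewrite /n ltr0n.
set K : R := k%:R.
have K0 : 0 <= K by rewrite /K ler0n.
have KK : K <= K * K.
  rewrite /K -natrM ler_nat; case: (k) => // k0.
  by rewrite leq_pmulr.
rewrite (ger0_norm K0).
rewrite -/n -/K.
move=> hxy hxF.
set c := (n * eps)^-1.
have c0 : 0 < c by rewrite invr_gt0 mulr_gt0.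
have cne : c * (n * eps) = 1 by rewrite mulVf // gt_eqF // mulr_gt0.
set s := Num.sqrt (F * (1 - F) / (n * eps)).
have s0 : 0 <= s := sqrtr_ge0 _.
have s2 : s ^+ 2 = c * (F * (1 - F)).
  rewrite sqr_sqrtr; first by rewrite [LHS]mulrC.
  apply: divr_ge0; first by apply: mulr_ge0; lra.
  by apply: mulr_ge0; apply: ltW.
set a := Num.sqrt (y * _ / _).
have a0 : 0 <= a := sqrtr_ge0 _.
have a2 : a ^+ 2 = c * (y * (1 - y)).
  rewrite sqr_sqrtr; first by rewrite [LHS]mulrC.
  apply: divr_ge0; first by apply: mulr_ge0; lra.
  by apply: mulr_ge0; apply: ltW.
set se := Num.sqrt eps.
have se0 : 0 < se by rewrite sqrtr_gt0.
have se2 : se ^+ 2 = eps by rewrite sqr_sqrtr // ltW.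
set w := (n * se)^-1 * K.
have w0 : 0 <= w by rewrite mulr_ge0 // invr_ge0 mulr_ge0 // ltW.
have w2 : c * (K / n) <= w ^+ 2.
  have -> : w ^+ 2 = K * K * (c / n).
    rewrite /w /c exprMn exprVn exprMn se2; field.
    by rewrite gt_eqF ?mulr_gt0 //= gt_eqF.
  have cn0 : 0 <= c / n by rewrite divr_ge0 // ltW.
  rewrite -subr_ge0.
  have -> : K * K * (c / n) - c * (K / n) = (K * K - K) * (c / n) by ring.
  by rewrite mulr_ge0 // subr_ge0.
set u := (2 * n * eps) `^ (3 / 4).
have u0 : 0 < u by rewrite powR_gt0 // mulr_gt0 // mulr_gt0.
have u4 : u ^+ 4 = (2 * n * eps) ^+ 3.
  by rewrite /u powR34 // ltW // mulr_gt0 // mulr_gt0.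
set e := 2 / u.
have e0' : 0 <= e by rewrite divr_ge0 // ltW.
have hFy : `|F - y| <= s + K / n.
  have := ler_normD (F - x) (x - y); rewrite addrA subrK (distrC F x).
  move: hxF hxy; rewrite -/s; lra.
have hFF : F * (1 - F) <= y * (1 - y) + `|F - y|.
  have : F * (1 - F) - y * (1 - y) = (F - y) * (1 - F - y) by ring.
  have : (F - y) * (1 - F - y) <= `|F - y|.
    rewrite (le_trans (ler_norm _)) // normrM.
    rewrite -[leRHS]mulr1 ler_wpM2l //.
    by rewrite ler_norml; apply/andP; split; lra.
  lra.
have hs2 : s ^+ 2 <= a ^+ 2 + c * s + w ^+ 2.
  rewrite s2 a2.
  have : c * (F * (1 - F)) <= c * (y * (1 - y)) + c * `|F - y|.
    by rewrite -mulrDr ler_wpM2l // ltW.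
  have : c * `|F - y| <= c * s + c * (K / n).
    by rewrite -mulrDr ler_wpM2l // ltW.
  lra.
have hsc : s ^+ 2 <= c / 4.
  have h : F * (1 - F) <= 4^-1.
    rewrite -subr_ge0.
    have -> : 4^-1 - F * (1 - F) = (F - 2^-1) ^+ 2 by field.
    exact: sqr_ge0.
  by rewrite s2 ler_wpM2l // ltW.
have hcs : c * s <= e ^+ 2.
  have hu : (c * s * u ^+ 2) ^+ 2 <= 4 ^+ 2.
    rewrite !exprMn.
    have -> : u ^+ 2 * u ^+ 2 = u ^+ 4 by rewrite -exprD.
    rewrite u4.
    have -> : (2 * n * eps) ^+ 3 = 8 * (n * eps) ^+ 3 by ring.
    have : c ^+ 2 * s ^+ 2 * (8 * (n * eps) ^+ 3) <= c ^+ 2 * (c / 4) * (8 * (n * eps) ^+ 3).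
      have h1 : 0 <= 8 * (n * eps) ^+ 3.
        by rewrite mulr_ge0 // exprn_ge0 // mulr_ge0 // ltW.
      have h2 : c ^+ 2 * s ^+ 2 <= c ^+ 2 * (c / 4).
        by rewrite ler_wpM2l // exprn_ge0 // ltW.
      by move: (ler_wpM2r h1 h2).
    have -> : c ^+ 2 * (c / 4) * (8 * (n * eps) ^+ 3) = 2 * (c * (n * eps)) ^+ 3.
      by rewrite exprMn; field.
    rewrite cne expr1n; lra.
  have hu' : c * s * u ^+ 2 <= 4.
    have cs0 : 0 <= c * s * u ^+ 2.
      by apply: mulr_ge0; [apply: mulr_ge0 => //; exact: ltW | apply: exprn_ge0; exact: ltW].
    move: hu cs0; set X := c * s * u ^+ 2; nra.
  rewrite /e expr_div_n.
  rewrite ler_pdivlMr ?exprn_gt0 //.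
  lra.
have hs : s <= a + w + e by nra.
have -> : (n^-1 + (n * se)^-1) * K = K / n + w by rewrite /w mulrDl mulrC.
lra.
Qed.

Lemma term_bound (R : realType) (q qh t : R) :
  `|(nat_of_bool (q <= t))%:R - (nat_of_bool (qh <= t))%:R : R|
  <= (nat_of_bool (qh - `|q - qh| <= t <= qh + `|q - qh|))%:R.
Proof.
have h1 := ler_norm (q - qh).
have h2 : qh - q <= `|q - qh| by rewrite distrC ler_norm.
have n0 : 0 <= `|q - qh| := normr_ge0 _.
case: (leP q t) => hq; case: (leP qh t) => hqh /=;
  rewrite ?subrr ?normr0 ?ler0n //.
- have -> : qh - `|q - qh| <= t by lra.
  have -> : t <= qh + `|q - qh| by lra.
  by rewrite /= subr0 normr1.
- have -> : qh - `|q - qh| <= t by lra.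
  have -> : t <= qh + `|q - qh| by lra.
  by rewrite /= sub0r normrN normr1.
Qed.

Lemma emp_diff (R : realType) (N : nat) (q qh : 'I_N -> R) (t : R) :
  `| (N%:R : R)^-1 * \sum_(n < N) (nat_of_bool (q n <= t))%:R
     - N%:R^-1 * \sum_(n < N) (nat_of_bool (qh n <= t))%:R |
  <= ((\sum_(n < N) nat_of_bool ((qh n - `|q n - qh n| <= t <= qh n + `|q n - qh n|)%R))%N)%:R / N%:R.
Proof.
rewrite -mulrBr normrM ger0_norm ?invr_ge0 ?ler0n // mulrC.
rewrite ler_wpM2r ?invr_ge0 ?ler0n // -sumrB natr_sum.
apply: (le_trans (ler_norm_sum _ _ _)).
by apply: ler_sum => n _; exact: term_bound.
Qed.

Lemma indic_ge0' (T : Type) (R : realType) (A : set T) w : 0 <= (\1_A w : R).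
Proof. by rewrite indicE ler0n. Qed.

Section moment.
Context d (T : measurableType d) (R : realType) (P : probability T R).
Variables (N : nat) (A : 'I_N -> set T) (F : R).
Hypothesis mA : forall n, measurable (A n).
Hypothesis F0 : 0 <= F.
Hypothesis pA : forall n, P (A n) = F%:E.
Hypothesis pAA : forall i j, i != j -> P (A i `&` A j) = (F * F)%:E.

Let S w := \sum_(n < N) \1_(A n) w : R.

Lemma mS : measurable_fun setT S.
Proof. by apply: measurable_sum => n; exact: measurable_indic. Qed.

Lemma S_ge0 w : 0 <= S w.
Proof. by apply: sumr_ge0 => n _; exact: indic_ge0'. Qed.

Lemma second_moment :
  (\int[P]_w ((S w - N%:R * F) ^+ 2)%:E = (N%:R * (F * (1 - F)))%:E)%E.
Proof.
set n : R := N%:R.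
pose G w := \sum_(i < N) \sum_(j < N) \1_(A i `&` A j) w + (n * F) ^+ 2.
have key w : (S w - n * F) ^+ 2 + (2 * n * F) * S w = G w.
  have hS : S w ^+ 2 = \sum_(i < N) \sum_(j < N) \1_(A i `&` A j) w.
    rewrite expr2 /S mulr_suml; apply: eq_bigr => i _.
    by rewrite mulr_sumr; apply: eq_bigr => j _; rewrite indicI.
  by rewrite /G -hS; ring.
have mSS : measurable_fun setT (fun w => \sum_(i < N) \sum_(j < N) \1_(A i `&` A j) w : R).
  apply: measurable_sum => i; apply: measurable_sum => j.
  by apply: measurable_indic; exact: measurableI.
have n0 : 0 <= n by rewrite /n ler0n.
have I1 : (\int[P]_w ((S w - n * F) ^+ 2)%:E + \int[P]_w ((2 * n * F) * S w)%:E
          = \int[P]_w (G w)%:E)%E.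
  rewrite -ge0_integralD //.
  - by apply: eq_integral => w _; rewrite -EFinD key.
  - by move=> w _; rewrite lee_fin sqr_ge0.
  - apply/measurable_EFinP; apply: measurable_funX; apply: measurable_funB => //.
    exact: mS.
  - by move=> w _; rewrite lee_fin mulr_ge0 ?S_ge0 // mulr_ge0 // mulr_ge0.
  - apply/measurable_EFinP; apply: measurable_funM => //; exact: mS.
have IS : (\int[P]_w (S w)%:E = (n * F)%:E)%E.
  under eq_integral do rewrite /S -sumEFin.
  rewrite ge0_integral_sum //; try solve [
    by move=> i; apply/measurable_EFinP; exact: measurable_indic |
    by move=> i w _; rewrite lee_fin indic_ge0'].
  under eq_bigr do rewrite (integral_indic _ measurableT (mA _)) setIT.
  rewrite (eq_bigr (fun=> F%:E)); last by move=> i _; exact: pA.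
  by rewrite sumEFin sumr_const card_ord mulr_natl.
have ISS : (\int[P]_w (\sum_(i < N) \sum_(j < N) \1_(A i `&` A j) w)%:E
    = (n * (n * F * F + F - F * F))%:E)%E.
  under eq_integral do rewrite -sumEFin.
  rewrite ge0_integral_sum //; try solve [
    move=> i; apply/measurable_EFinP; apply: measurable_sum => j;
    by apply: measurable_indic; exact: measurableI |
    by move=> i w _; rewrite lee_fin sumr_ge0 // => j _; exact: indic_ge0'].
  rewrite (eq_bigr (fun i => (n * F * F + F - F * F)%:E)); last first.
    move=> i _.
    under eq_integral do rewrite -sumEFin.
    rewrite ge0_integral_sum //; try solve [
      by move=> j; apply/measurable_EFinP; apply: measurable_indic; exact: measurableI |
      by move=> j w _; rewrite lee_fin indic_ge0'].
    rewrite (eq_bigr (fun j => (F * F + (nat_of_bool (i == j))%:R * (F - F * F))%:E)); last first.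
      move=> j _; rewrite (integral_indic _ measurableT (measurableI _ _ (mA i) (mA j))) setIT.
      case: eqP => [<-|/eqP ij]; last by rewrite mul0r addr0; exact: pAA.
      by rewrite setIid mul1r addrC subrK; exact: pA.
    rewrite sumEFin big_split /= sumr_const card_ord -mulr_suml.
    rewrite (bigD1 i) //= eqxx big1 => [|j /negbTE]; last by rewrite eq_sym => ->.
    by congr (_%:E); rewrite -mulr_natl -/n addr0 mul1r; ring.
  rewrite sumEFin sumr_const card_ord -/n mulr_natl.
  congr (_%:E); rewrite -mulr_natl -/n; ring.
have IG : (\int[P]_w (G w)%:E = (n * (n * F * F + F - F * F) + (n * F) ^+ 2)%:E)%E.
  rewrite /G.
  under eq_integral do rewrite EFinD.
  rewrite ge0_integralD //.
  - rewrite ISS integral_cst // [X in (_ * X)%E]probability_setT.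
    by rewrite mule1 -EFinD.
  - by move=> w _; rewrite lee_fin sumr_ge0 // => i _; rewrite sumr_ge0 // => j _; exact: indic_ge0'.
  - exact/measurable_EFinP.
  - by move=> w _; rewrite lee_fin sqr_ge0.
have IZ : (\int[P]_w ((2 * n * F) * S w)%:E = ((2 * n * F) * (n * F))%:E)%E.
  under eq_integral do rewrite EFinM.
  rewrite ge0_integralZl_EFin //.
  - by rewrite IS -EFinM.
  - by move=> w _; rewrite lee_fin S_ge0.
  - exact/measurable_EFinP/mS.
  - by rewrite mulr_ge0 // mulr_ge0.
move: I1; rewrite IZ IG.
set I := (\int[P]_w ((S w - n * F) ^+ 2)%:E)%E.
have : (0 <= I)%E.
  by apply: integral_ge0 => w _; rewrite lee_fin sqr_ge0.
case: I => // r _.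
rewrite -EFinD; case => h.
congr (_%:E).
have -> : r = (r + 2 * n * F * (n * F)) - 2 * n * F * (n * F) by ring.
rewrite h; ring.
Qed.
End moment.

Lemma tail_bound d (T : measurableType d) (R : realType) (P : probability T R)
  (g : T -> R) (Ec : set T) (k : R) :
  measurable Ec -> measurable_fun setT g -> (forall w, 0 <= g w) -> 0 < k ->
  (forall w, Ec w -> k <= g w) ->
  (P Ec <= (k^-1)%:E * \int[P]_w (g w)%:E)%E.
Proof.
move=> mE mg g0 k0 hk.
apply: (@le_trans _ _ (\int[P]_w (\1_Ec w)%:E)%E).
  by rewrite integral_indic // setIT; exact: lexx.
rewrite -ge0_integralZl_EFin //; last 3 first.
- by move=> w _; rewrite lee_fin.
- exact/measurable_EFinP.
- by rewrite invr_ge0 ltW.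
apply: ge0_le_integral => //.
- by apply/measurable_EFinP; exact: measurable_indic.
- apply/measurable_EFinP; apply: measurable_funM => //; exact: measurable_cst.
move=> w _; rewrite -EFinM lee_fin indicE.
case: (boolP (w \in Ec)) => [/set_mem /hk h|_] /=.
  by rewrite -(mulVf (lt0r_neq0 k0)) ler_wpM2l // invr_ge0 ltW.
by rewrite mulr_ge0 // invr_ge0 ltW.
Qed.

Section meas.
Context d (T : measurableType d) (R : realType).
Implicit Types f g : T -> R.
Lemma mset_le f g : measurable_fun setT f -> measurable_fun setT g ->
  measurable [set w | f w <= g w].
Proof.
move=> mf mg.
have := measurable_fun_ler mf mg measurableT (Y := [set true]) I.
by rewrite setTI.
Qed.
Lemma mset_lt f g : measurable_fun setT f -> measurable_fun setT g ->
  measurable [set w | f w < g w].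
Proof.
move=> mf mg.
have := measurable_fun_ltr mf mg measurableT (Y := [set true]) I.
by rewrite setTI.
Qed.
Lemma mM f g : measurable_fun setT f -> measurable_fun setT g ->
  measurable_fun setT (fun w => f w * g w).
Proof. exact: measurable_funM. Qed.
Lemma mB f g : measurable_fun setT f -> measurable_fun setT g ->
  measurable_fun setT (fun w => f w - g w).
Proof. exact: measurable_funB. Qed.
Lemma mD f g : measurable_fun setT f -> measurable_fun setT g ->
  measurable_fun setT (fun w => f w + g w).
Proof. exact: measurable_funD. Qed.
Lemma mC (h : R -> R) f : measurable_fun setT h -> measurable_fun setT f ->
  measurable_fun setT (fun w => h (f w)).
Proof. exact: measurableT_comp. Qed.
Lemma mK (c : R) : measurable_fun setT (fun _ : T => c).
Proof. exact: measurable_cst. Qed.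
Lemma mbool (b : T -> bool) : measurable_fun setT b ->
  measurable_fun setT (fun w => (nat_of_bool (b w))%:R : R).
Proof.
move=> mb.
rewrite (_ : (fun w => _) = (fun w => if b w then 1 else 0)); last first.
  by apply/funext => w; case: (b w).
by apply: measurable_fun_if => //; exact: measurable_cst.
Qed.
Lemma mle f g : measurable_fun setT f -> measurable_fun setT g ->
  measurable_fun setT (fun w => f w <= g w).
Proof. exact: measurable_fun_ler. Qed.
Lemma mand (b c : T -> bool) : measurable_fun setT b -> measurable_fun setT c ->
  measurable_fun setT (fun w => b w && c w).
Proof. exact: measurable_and. Qed.
Lemma msum (N : nat) (h : 'I_N -> T -> R) : (forall n, measurable_fun setT (h n)) ->
  measurable_fun setT (fun w => \sum_(n < N) h n w).
Proof. exact: measurable_sum. Qed.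
End meas.
Lemma msqrt (R : realType) : measurable_fun setT (@Num.sqrt R).
Proof. exact: continuous_measurable_fun (@sqrt_continuous R). Qed.
Lemma mnorm (R : realType) : measurable_fun setT (fun x : R => `|x|).
Proof. exact: normr_measurable. Qed.

Lemma sum_bool_le (N : nat) (b : 'I_N -> bool) : (\sum_(n < N) nat_of_bool (b n) <= N)%N.
Proof.
rewrite -[X in (_ <= X)%N]card_ord -sum1_card.
by apply: leq_sum => i _; exact: leq_b1.
Qed.

Lemma emp01 (R : realType) (N : nat) (b : 'I_N -> bool) : (1 <= N)%N ->
  0 <= (N%:R : R)^-1 * \sum_(n < N) (nat_of_bool (b n))%:R <= 1.
Proof.
move=> N1; have n0 : 0 < (N%:R : R) by rewrite ltr0n.
rewrite -natr_sum; apply/andP; split.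
  by rewrite mulr_ge0 // invr_ge0 ler0n.
rewrite mulrC ler_pdivrMr // mul1r ler_nat.
exact: sum_bool_le.
Qed.

Theorem theorem4 (R : realType) (d d' : measure_display)
  (T : measurableType d) (P : probability T R) (Th : measurableType d')
  (theta : T -> Th) (N : nat) (th : 'I_N -> T -> Th)
  (Q Qhat : Th -> R) (eps : R) :
  measurable_fun setT theta ->
  (forall n, measurable_fun setT (th n)) ->
  mutually_independent P th ->
  identically_distributed P th theta ->
  measurable_fun setT Q ->
  measurable_fun setT Qhat ->
  0 < eps < 1 -> (1 <= N)%N ->
  forall t : R,
  ((1 - 2 * eps + eps ^+ 2)%:E <=
   P [set w : T | (let FhN := empirical_cdf th Qhat w t in
     `| qoi_cdf P theta Q t - FhN |
       <= Num.sqrt (FhN * (1 - FhN) / (N%:R * eps))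
          + (N%:R^-1 + (N%:R * Num.sqrt eps)^-1)
            * `| \sum_(n < N)
                   (nat_of_bool
                     (Qhat (th n w) - `|Q (th n w) - Qhat (th n w)| <= t <=
                      Qhat (th n w) + `|Q (th n w) - Qhat (th n w)|))%:R |
          + 2 / ((2 * N%:R * eps) `^ (3 / 4)))%R])%E.
Proof.
move=> mtheta mth hind hid mQ mQh /andP[e0 e1] N1 t.
set Qt := [set x : Th | Q x <= t].
have mQt : measurable Qt by apply: mset_le => //; exact: mK.
pose A n := [set w | Q (th n w) <= t].
have mQn n : measurable_fun setT (fun w => Q (th n w)) := measurableT_comp mQ (mth n).
have mA n : measurable (A n) by apply: mset_le; [exact: mQn | exact: mK].
have mp : measurable [set w | Q (theta w) <= t].
  by apply: mset_le; [exact: measurableT_comp mQ mtheta | exact: mK].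
set F := qoi_cdf P theta Q t.
have pF : P [set w | Q (theta w) <= t] = F%:E.
  by rewrite /F /qoi_cdf fineK // fin_num_measure.
have pA n : P (A n) = F%:E by rewrite -pF; exact: hid n Qt mQt.
have F0 : 0 <= F by rewrite -lee_fin -pF measure_ge0.
have F1 : F <= 1 by rewrite -lee_fin -pF probability_le1.
have pAA i j : i != j -> P (A i `&` A j) = (F * F)%:E.
  move=> ij.
  pose B k := if (k == i) || (k == j) then Qt else setT.
  have mB k : measurable (B k) by rewrite /B; case: ifP.
  have := hind B mB.
  rewrite (_ : \bigcap_(k in _) _ = A i `&` A j); last first.
    apply/seteqP; split => w /=.
      move=> h; split.
        by have := h i I; rewrite /B eqxx.
      by have := h j I; rewrite /B eqxx orbT.
    move=> [hi hj] k _; rewrite /B /=.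
    case: (eqVneq k i) => [->//|ki]; case: (eqVneq k j) => [->//|kj] /=.
    by [].
  move=> ->.
  rewrite (bigD1 i) //= (bigD1 j) /=; last by rewrite eq_sym.
  rewrite big1; last first.
    move=> k /andP[ki kj]; rewrite /B (negbTE ki) (negbTE kj) /= preimage_setT.
    exact: probability_setT.
  rewrite /B eqxx /= eqxx orbT.
  have -> : P (th i @^-1` Qt) = F%:E by exact: pA.
  have -> : P (th j @^-1` Qt) = F%:E by exact: pA.
  by rewrite mule1 -EFinM.
have hm := @second_moment _ _ _ P _ _ _ mA F0 pA pAA.
set n : R := N%:R.
have n0 : 0 < n by rewrite /n ltr0n.
pose S w := \sum_(k < N) \1_(A k) w : R.
pose x w := empirical_cdf th Q w t.
have hx w : x w = n^-1 * S w.
  rewrite /x /empirical_cdf; congr (_ * _); apply: eq_bigr => k _.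
  by rewrite indicE mem_setE.
have mx : measurable_fun setT x.
  rewrite /x /empirical_cdf; apply: mM; first exact: mK.
  apply: msum => k; apply: mbool; apply: mle; [exact: mQn | exact: mK].
have mS : measurable_fun setT S.
  by apply: msum => k; exact: measurable_indic.
have mg : measurable_fun setT (fun w => (S w - n * F) ^+ 2).
  by apply: measurable_funX; apply: mB => //; exact: mK.
have g0 w : 0 <= (S w - n * F) ^+ 2 := sqr_ge0 _.
set s := Num.sqrt (F * (1 - F) / (n * eps)).
have s0 : 0 <= s := sqrtr_ge0 _.
pose E := [set w | `|x w - F| <= s].
have mE : measurable E.
  apply: mset_le; last exact: mK.
  by apply: mC; [exact: mnorm | apply: mB => //; exact: mK].
have Ceq : ~` E = [set w | s < `|x w - F|].
  apply/seteqP; split => w /=.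
    by move=> h; rewrite ltNge; apply/negP.
  by rewrite ltNge => /negP.
have mEc : measurable (~` E) := measurableC mE.
have xS w : `|x w - F| = `|S w - n * F| / n.
  rewrite hx -[F](mulKf (lt0r_neq0 n0)) -mulrBr normrM gtr0_norm ?invr_gt0 //.
  by rewrite mulrC mulKf ?lt0r_neq0 // mulrC.
have FF0 : 0 <= F * (1 - F) by rewrite mulr_ge0 // subr_ge0.
have hEc : (P (~` E) <= eps%:E)%E.
  have [spos|s00] := ltP 0 s; last first.
    have sz : s = 0 by apply/eqP; rewrite eq_le s00 s0.
    have FFz : F * (1 - F) = 0.
      move: sz; rewrite /s => /eqP; rewrite sqrtr_eq0 pmulr_lle0 ?invr_gt0 ?mulr_gt0 //.
      by move=> h; apply/eqP; rewrite eq_le h FF0.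
    have hk w : (~` E) w -> 1 <= (S w - n * F) ^+ 2.
      rewrite Ceq /= sz xS => h.
      have hS : S w = (\sum_(k < N) nat_of_bool (Q (th k w) <= t)%R)%:R.
        by rewrite natr_sum; apply: eq_bigr => k _; rewrite indicE mem_setE.
      have := @sum_bool_le N (fun k => Q (th k w) <= t).
      move: hS h; set m := (\sum_(k < N) _)%N => hS h hmN.
      have hne : S w - n * F != 0.
        apply/eqP => h0; move: h; rewrite h0 normr0 mul0r ltxx //.
      move: FFz => /eqP; rewrite mulf_eq0 subr_eq0 => /orP[/eqP FZ|/eqP FO].
        move: hne; rewrite FZ mulr0 subr0 hS => hne.
        have m1 : (1 <= m)%N by rewrite lt0n; apply: contraNneq hne => ->.
        have : (1 : R) <= m%:R by rewrite ler1n.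
        by move: hne => _ h1; nra.
      move: hne; rewrite -FO mulr1 hS /n => hne.
      have mN : (m < N)%N.
        rewrite ltn_neqAle hmN andbT; apply: contraNneq hne => ->; by rewrite subrr.
      have : (m%:R : R) + 1 <= N%:R by rewrite -[1]/(1%:R) -natrD ler_nat addn1.
      have : (0 : R) <= m%:R by rewrite ler0n.
      move=> _ h1; nra.
    have := @tail_bound _ _ _ P _ _ _ mEc mg g0 ltr01 hk.
    rewrite hm FFz mulr0 invr1 mul1e => h; apply: (le_trans h).
    by rewrite lee_fin ltW.
  have FFpos : 0 < F * (1 - F).
    move: spos; rewrite /s sqrtr_gt0 pmulr_lgt0 // invr_gt0 mulr_gt0 //.
  have s2 : s ^+ 2 = F * (1 - F) / (n * eps) by rewrite sqr_sqrtr // divr_ge0 // mulr_ge0 // ltW.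
  have kpos : 0 < (n * s) ^+ 2 by rewrite exprn_gt0 // mulr_gt0.
  have hk w : (~` E) w -> (n * s) ^+ 2 <= (S w - n * F) ^+ 2.
    rewrite Ceq /= xS ltr_pdivlMr // => h.
    rewrite -[X in _ <= X]real_normK ?num_real //.
    have h0 : 0 <= n * s by rewrite mulr_ge0 // ltW.
    move: h h0; rewrite [s * n]mulrC; set a := `|_|; nra.
  have := @tail_bound _ _ _ P _ _ _ mEc mg g0 kpos hk.
  rewrite hm -EFinM => h; apply: (le_trans h); rewrite lee_fin.
  rewrite exprMn s2 le_eqVlt; apply/orP; left; apply/eqP.
  have Fn0 : F != 0 by apply: contraTneq FFpos => ->; rewrite mul0r ltxx.
  have F1n0 : 1 - F != 0 by apply: contraTneq FFpos => ->; rewrite mulr0 ltxx.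
  field; by rewrite Fn0 F1n0 lt0r_neq0 // -/n lt0r_neq0.
have PE : ((1 - eps)%:E <= P E)%E.
  have := probability_setC P mE.
  have fE : P E = (fine (P E))%:E by rewrite fineK // fin_num_measure.
  move=> hC; move: hEc; rewrite hC fE -EFinB lee_fin => h; rewrite lee_fin; lra.
pose yf w := empirical_cdf th Qhat w t.
pose Kf w := \sum_(k < N) (nat_of_bool (Qhat (th k w) - `|Q (th k w) - Qhat (th k w)| <= t <= Qhat (th k w) + `|Q (th k w) - Qhat (th k w)|))%:R : R.
pose Lf w := `|F - yf w|.
pose Rf w := Num.sqrt (yf w * (1 - yf w) / (n * eps)) + (n^-1 + (n * Num.sqrt eps)^-1) * `|Kf w| + 2 / ((2 * n * eps) `^ (3 / 4)).
have mQhn k : measurable_fun setT (fun w => Qhat (th k w)) := measurableT_comp mQh (mth k).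
have my : measurable_fun setT yf.
  rewrite /yf /empirical_cdf; apply: mM; first exact: mK.
  apply: msum => k; apply: mbool; apply: mle; [exact: mQhn | exact: mK].
have me k : measurable_fun setT (fun w => `|Q (th k w) - Qhat (th k w)|).
  apply: mC; first exact: mnorm.
  by apply: mB; [exact: mQn|exact: mQhn].
have mKf : measurable_fun setT Kf.
  apply: msum => k; apply: mbool; apply: mand; apply: mle; try exact: mK.
  - by apply: mB; [exact: mQhn | exact: me].
  - by apply: mD; [exact: mQhn | exact: me].
have mG : measurable [set w | Lf w <= Rf w].
  apply: mset_le.
  - apply: mC; first exact: mnorm.
    by apply: mB; [exact: mK | exact: my].
  - apply: mD; last exact: mK.
    apply: mD.
    + apply: mC; first exact: msqrt.
      apply: mM; last exact: mK.
      by apply: mM; [exact: my | apply: mB; [exact: mK|exact: my]].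
    + apply: mM; first exact: mK.
      by apply: mC; [exact: mnorm | exact: mKf].
have EG : E `<=` [set w | Lf w <= Rf w].
  move=> w; rewrite /E /= => hw.
  rewrite /Lf /Rf /Kf -natr_sum.
  apply: (@det_bound R N _ eps F (x w) (yf w)) => //.
  - by apply/andP.
  - by apply/andP.
  - exact: emp01.
  - by rewrite /x /yf /empirical_cdf; exact: emp_diff.
apply: le_trans (le_trans PE (le_measure P (mem_set mE) (mem_set mG) EG)).
by rewrite lee_fin; nra.
Qed.
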